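(* Let $P$ be a causal logic program (possibly with default negation) and let $P'$ be its unlabelled version. Then: (1) if $I$ is a causal stable model of $P$, then $I^{cl}$ is a stable model of $P'$; (2) if $I'$ is a stable model of $P'$, then there is a unique causal stable model $I$ of $P$ such that $I'=I^{cl}$.
   Context: Causal values are down-sets of causal graphs (reflexively–transitively closed directed graphs on labels, ordered by reverse inclusion), with $0=\emptyset$ and $1$ the set of all causal graphs; $*$ = intersection, $+$ = union, $U\cdot U'={\downarrow}\{G\cdot G'\}$ with $G\cdot G'$ the closure of the graph with vertices $V\cup V'$ and edges $E\cup E'\cup(V\times V')$; a label $l$ denotes ${\downarrow}$ of the graph with only edge $(l,l)$. A causal logic program is a set of rules $t:H\leftarrow B_1,\dots,B_n$ with $t$ a label or $1$, $H$ an atom and $B_i$ literals $p$ or $\mathit{not}\ p$. A causal interpretation maps atoms to causal values; $I(\mathit{not}\ p)=1$ if $I(p)=0$, else $0$. For positive programs, $I$ is a model iff $(I(B_1)*\dots*I(B_n))\cdot t\subseteq I(H)$ for each rule, and the least model exists. The reduct $P^I$ is obtained by removing every rule containing a negative literal $B$ with $I(B)\ne 0$, then deleting all negative literals from the remaining rules. $I$ is a causal stable model of $P$ iff $I$ is the least causal model of $P^I$. The unlabelled version $P'$ replaces every label by $1$ (a standard normal program), and stable models of $P'$ are Gelfond–Lifschitz stable models viewed as maps to $\{0,1\}$. $I^{cl}(p)=0$ if $I(p)=0$, else $1$. *)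

(* Defs.v *)
From Stdlib Require Import List Relations.
Import ListNotations.
Set Implicit Arguments.

Section Causal.
Variables Lb Atom : Type.

(** A causal graph is represented by its edge relation on labels; it must be
    reflexively closed on its vertices (every vertex has a self-loop, so the
    vertex set is {x | G x x}) and transitively closed. *)
Definition cgraph := Lb -> Lb -> Prop.

Definition is_cgraph (G : cgraph) : Prop :=
  (forall x y, G x y -> G x x /\ G y y) /\
  (forall x y z, G x y -> G y z -> G x z).

(** Inclusion of edge sets. Causal graphs are ordered by REVERSE inclusion:
    G <= G'  iff  edges G' are included in edges G. *)
Definition gsub (G G' : cgraph) : Prop := forall x y, G x y -> G' x y.

(** Causal values: down-sets of causal graphs (w.r.t. reverse inclusion),
    i.e. sets of causal graphs closed under causal supergraphs. *)
Definition cvalue := cgraph -> Prop.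

Definition is_cvalue (U : cvalue) : Prop :=
  (forall G, U G -> is_cgraph G) /\
  (forall G G', U G -> is_cgraph G' -> gsub G G' -> U G').

Definition czero : cvalue := fun _ => False.
Definition cone : cvalue := fun G => is_cgraph G.
Definition cmeet (U V : cvalue) : cvalue := fun G => U G /\ V G.
Definition cjoin (U V : cvalue) : cvalue := fun G => U G \/ V G.

(** The value of a label l: down-closure of the graph with the only edge (l,l). *)
Definition clabel (l : Lb) : cvalue := fun G => is_cgraph G /\ G l l.

(** G . G' : reflexive-transitive closure of the graph with vertices V u V'
    and edges E u E' u (V x V'). *)
Definition gprod (G G' : cgraph) : cgraph :=
  clos_trans Lb (fun a b => G a b \/ G' a b \/ (G a a /\ G' b b)).

(** U . U' = down-closure of { G . G' | G in U, G' in U' }. *)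
Definition cprod (U V : cvalue) : cvalue :=
  fun G => is_cgraph G /\
    exists G1 G2, U G1 /\ V G2 /\ gsub (gprod G1 G2) G.

Inductive lit : Type := Pos (p : Atom) | Neg (p : Atom).

(** A rule  t : H <- B1,...,Bn ;  rlab = Some l for a label l, None for t = 1. *)
Record crule : Type := CRule { rlab : option Lb; rhead : Atom; rbody : list lit }.

Definition cinterp := Atom -> cvalue.

Definition is_cinterp (I : cinterp) : Prop := forall p, is_cvalue (I p).

Definition nonzero (U : cvalue) : Prop := exists G, U G.

Definition litval (I : cinterp) (l : lit) : cvalue :=
  match l with
  | Pos p => I p
  | Neg p => fun G => is_cgraph G /\ ~ nonzero (I p)   (* 1 if I p = 0, else 0 *)
  end.

Definition bodyval (I : cinterp) (b : list lit) : cvalue :=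
  fold_right (fun l acc => cmeet (litval I l) acc) cone b.

Definition labval (t : option Lb) : cvalue :=
  match t with Some l => clabel l | None => cone end.

Definition cmodel (P : crule -> Prop) (I : cinterp) : Prop :=
  forall r, P r -> forall G,
    cprod (bodyval I (rbody r)) (labval (rlab r)) G -> I (rhead r) G.

Definition cleast_model (P : crule -> Prop) (I : cinterp) : Prop :=
  is_cinterp I /\ cmodel P I /\
  forall J, is_cinterp J -> cmodel P J -> forall p G, I p G -> J p G.

Definition is_pos (l : lit) : bool := match l with Pos _ => true | Neg _ => false end.

Definition creduct (P : crule -> Prop) (I : cinterp) : crule -> Prop :=
  fun r' => exists r, P r /\
    (forall p, In (Neg p) (rbody r) -> ~ nonzero (I p)) /\
    r' = CRule (rlab r) (rhead r) (filter is_pos (rbody r)).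

Definition causal_stable (P : crule -> Prop) (I : cinterp) : Prop :=
  is_cinterp I /\ cleast_model (creduct P I) I.

Record nrule : Type := NRule { nhead : Atom; nbody : list lit }.

(** Unlabelled version P' (every label replaced by 1). *)
Definition unlabel (P : crule -> Prop) : nrule -> Prop :=
  fun n => exists r, P r /\ n = NRule (rhead r) (rbody r).

Definition lit_true (M : Atom -> Prop) (l : lit) : Prop :=
  match l with Pos p => M p | Neg p => ~ M p end.

Definition nmodel (Q : nrule -> Prop) (M : Atom -> Prop) : Prop :=
  forall n, Q n -> (forall l, In l (nbody n) -> lit_true M l) -> M (nhead n).

Definition nleast_model (Q : nrule -> Prop) (M : Atom -> Prop) : Prop :=
  nmodel Q M /\ forall N, nmodel Q N -> forall p, M p -> N p.

Definition gl_reduct (Q : nrule -> Prop) (M : Atom -> Prop) : nrule -> Prop :=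
  fun n' => exists n, Q n /\
    (forall p, In (Neg p) (nbody n) -> ~ M p) /\
    n' = NRule (nhead n) (filter is_pos (nbody n)).

Definition gl_stable (Q : nrule -> Prop) (M : Atom -> Prop) : Prop :=
  nleast_model (gl_reduct Q M) M.

Definition icl (I : cinterp) : Atom -> Prop := fun p => nonzero (I p).

End Causal.

(* Main.v *)
Require Import Defs.
From Stdlib Require Import List Relations.

Definition redP {Lb Atom : Type} (P : crule Lb Atom -> Prop) (M : Atom -> Prop)
  : crule Lb Atom -> Prop :=
  fun r' => exists r, P r /\
    (forall p, In (Neg p) (rbody r) -> ~ M p) /\
    r' = CRule (rlab r) (rhead r) (filter (@is_pos Atom) (rbody r)).

Definition Gfull {Lb : Type} : cgraph Lb := fun _ _ => True.

Lemma Gfull_cg {Lb : Type} : is_cgraph (@Gfull Lb).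
Proof. split; unfold Gfull; auto. Qed.

Lemma nonzero_full {Lb : Type} (U : cvalue Lb) :
  is_cvalue U -> nonzero U -> U Gfull.
Proof.
  intros [H1 H2] [G HG]. apply (H2 G); auto. apply Gfull_cg. intros x y _; exact Logic.I.
Qed.

Lemma body_full {Lb Atom : Type} (I : cinterp Lb Atom) (b : list (lit Atom)) :
  (forall l, In l b -> litval I l Gfull) -> bodyval I b Gfull.
Proof.
  induction b as [|l b IH]; simpl; intros H.
  - apply Gfull_cg.
  - split; auto.
Qed.

Lemma body_pos {Lb Atom : Type} (I : cinterp Lb Atom) b G :
  bodyval I b G -> forall q, In (Pos q) b -> I q G.
Proof.
  induction b as [|l b IH]; simpl; intros H q Hq; [contradiction|].
  destruct H as [H1 H2]. destruct Hq as [E|Hq]; [subst l; exact H1|auto].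
Qed.

Lemma body_mono {Lb Atom : Type} (I J : cinterp Lb Atom) b G :
  (forall p G, I p G -> J p G) ->
  bodyval I (filter (@is_pos Atom) b) G -> bodyval J (filter (@is_pos Atom) b) G.
Proof.
  intros HIJ. induction b as [|l b IH]; simpl; auto.
  destruct l; simpl; auto. intros [H1 H2]; split; auto.
Qed.

Lemma lemA {Lb Atom : Type} (P : crule Lb Atom -> Prop) M (I : cinterp Lb Atom) :
  is_cinterp I -> cmodel (redP P M) I -> nmodel (gl_reduct (unlabel P) M) (icl I).
Proof.
  intros HI HM n [n0 [[r [Pr ->]] [Hneg ->]]] Hb. simpl in *.
  exists Gfull.
  apply (HM (CRule (rlab r) (rhead r) (filter (@is_pos Atom) (rbody r)))).
  - exists r; auto.
  - simpl. split; [apply Gfull_cg|].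
    exists Gfull, Gfull. split; [|split].
    + apply body_full. intros l Hl. pose proof (Hb l Hl) as Hl'.
      apply filter_In in Hl. destruct Hl as [_ Hp].
      destruct l; simpl in *; [|discriminate]. apply nonzero_full; auto.
    + destruct (rlab r); simpl; [split; [apply Gfull_cg|exact Logic.I]|apply Gfull_cg].
    + intros x y _; exact Logic.I.
Qed.

Definition liftN {Lb Atom : Type} (N : Atom -> Prop) : cinterp Lb Atom :=
  fun p G => is_cgraph G /\ N p.

Lemma liftN_ci {Lb Atom : Type} (N : Atom -> Prop) : is_cinterp (@liftN Lb Atom N).
Proof.
  intros p. split.
  - intros G [H _]; auto.
  - intros G G' [_ H] H' _; split; auto.
Qed.

Lemma lemB {Lb Atom : Type} (P : crule Lb Atom -> Prop) M N :
  nmodel (gl_reduct (unlabel P) M) N -> cmodel (redP P M) (@liftN Lb Atom N).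
Proof.
  intros HN r [r0 [Pr [Hneg ->]]] G [HG [G1 [G2 [Hb _]]]]. simpl in *.
  split; auto.
  apply (HN (NRule (rhead r0) (filter (@is_pos Atom) (rbody r0)))).
  - exists (NRule (rhead r0) (rbody r0)). simpl. split; [exists r0; auto|]. auto.
  - simpl. intros l Hl. pose proof (body_pos _ _ _ Hb) as Hq.
    pose proof Hl as Hl2. apply filter_In in Hl2. destruct Hl2 as [_ Hp].
    destruct l as [q|q]; simpl in *; [|discriminate].
    destruct (Hq q Hl); auto.
Qed.

Definition Imin {Lb Atom : Type} (R : crule Lb Atom -> Prop) : cinterp Lb Atom :=
  fun p G => is_cgraph G /\ forall J, is_cinterp J -> cmodel R J -> J p G.

Lemma Imin_least {Lb Atom : Type} (P : crule Lb Atom -> Prop) M :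
  cleast_model (redP P M) (Imin (redP P M)).
Proof.
  split; [|split].
  - intros p. split.
    + intros G [H _]; auto.
    + intros G G' [_ H] H' Hs. split; auto. intros J HJ HM.
      destruct (HJ p) as [_ Hu]. apply (Hu G); [apply H; assumption|assumption|assumption].
  - intros r Hr G HG. split; [destruct HG; auto|].
    intros J HJ HM. apply (HM r Hr).
    destruct Hr as [r0 [Pr [Hneg ->]]]. simpl in *.
    destruct HG as [HG [G1 [G2 [Hb [Hl Hs]]]]]. split; auto.
    exists G1, G2. split; auto.
    eapply body_mono; [|exact Hb]. intros p G0 [_ H]. apply H; assumption.
  - intros J HJ HM p G [_ H]. apply H; assumption.
Qed.

Lemma redP_ext {Lb Atom : Type} (P : crule Lb Atom -> Prop) M1 M2 :
  (forall p, M1 p <-> M2 p) -> forall r, redP P M1 r -> redP P M2 r.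
Proof.
  intros H r [r0 [Pr [Hn E]]]. exists r0; split; auto. split; auto.
  intros p Hp HM. apply (Hn p Hp). apply H; auto.
Qed.

Lemma cleast_ext {Lb Atom : Type} (R1 R2 : crule Lb Atom -> Prop) I :
  (forall r, R1 r <-> R2 r) -> cleast_model R1 I -> cleast_model R2 I.
Proof.
  intros H [H1 [H2 H3]]. split; [auto|split].
  - intros r Hr. apply H2. apply H; auto.
  - intros J HJ HM. apply H3; auto. intros r Hr. apply HM. apply H; auto.
Qed.

Theorem theorem6 (Lb Atom : Type) (P : crule Lb Atom -> Prop) :
  (forall I : cinterp Lb Atom,
     causal_stable P I -> gl_stable (unlabel P) (icl I)) /\
  (forall M : Atom -> Prop,
     gl_stable (unlabel P) M ->
     exists I : cinterp Lb Atom,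
       causal_stable P I /\ (forall p, icl I p <-> M p) /\
       (forall J : cinterp Lb Atom,
          causal_stable P J -> (forall p, icl J p <-> M p) ->
          forall p G, J p G <-> I p G)).
Proof.
  split.
  - intros I [HI [_ [HM Hl]]]. split.
    + apply (lemA P (icl I) I HI HM).
    + intros N HN p [G HG].
      pose proof (Hl (liftN N) (liftN_ci N) (lemB P (icl I) N HN) p G HG) as [_ X].
      exact X.
  - intros M [HMm HMl].
    pose proof (Imin_least P M) as [HI [HIm HIl]].
    assert (Hcl : forall p, icl (Imin (redP P M)) p <-> M p).
    { intros p; split.
      - intros [G HG].
        destruct (HIl (liftN M) (liftN_ci M) (lemB P M M HMm) p G HG); auto.
      - intros Hp. apply (HMl _ (lemA P M _ HI HIm)); auto. }
    exists (Imin (redP P M)). split; [|split; auto].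
    + split; auto. eapply cleast_ext; [|apply Imin_least].
      intros r; split; apply redP_ext; intros p; split; apply Hcl.
    + intros J [HJ HJl] HJcl.
      assert (HJ' : cleast_model (redP P M) J).
      { eapply cleast_ext; [|exact HJl].
        intros r; split; apply redP_ext; intros p; split; apply HJcl. }
      destruct HJ' as [_ [HJm HJleast]].
      intros p G; split.
      * intros H. apply (HJleast _ HI HIm); auto.
      * intros H. apply (HIl _ HJ HJm); auto.
Qed.
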